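(* Let $R$ be a nontrivial locally finite commutative ring, $\Sigma$ an alphabet, $L\in\mathrm{RevL}(R,\Sigma)$ a language, and $M_L$ the syntactic monoid of $L$. Then the idempotents of $M_L$ commute, i.e., $M_L\in\mathbf{ECom}$.
   Context: A ring is a semiring $(R,+,\cdot,0,1)$ whose additive monoid is an abelian group; nontrivial means $0\neq1$; it is locally finite if every subsemiring generated by a finite subset is finite. For a semiring $S$ and finite nonempty alphabet $\Sigma$, a series is a map $r\colon\Sigma^*\to S$ with value $(r,w)$ and support $\mathrm{supp}(r)=\{w\mid(r,w)\neq0\}$. A weighted automaton over $S$ and $\Sigma$ is $\mathcal{A}=(Q,\sigma,\iota,\tau)$ with $Q$ finite, $\sigma\colon Q\times\Sigma\times Q\to S$, $\iota,\tau\colon Q\to S$; a run on $w=a_1\cdots a_t$ is $q_0a_1q_1\cdots a_tq_t$ with all $\sigma(q_{k-1},a_k,q_k)\neq0$, of weight $\iota(q_0)\sigma(q_0,a_1,q_1)\cdots\sigma(q_{t-1},a_t,q_t)\tau(q_t)$, and $(\|\mathcal{A}\|,w)$ is the sum of weights of all runs on $w$. $\mathcal{A}$ is reversible if for all $p,p',q,q'\in Q$, $a\in\Sigma$: $\sigma(p,a,q)\neq0\neq\sigma(p,a,q')$ implies $q=q'$, and $\sigma(p,a,q)\neq0\neq\sigma(p',a,q)$ implies $p=p'$. $\mathrm{RevL}(S,\Sigma)$ is the set of supports of series realised by reversible weighted automata over $S$ and $\Sigma$. The syntactic monoid $M_L$ is $\Sigma^*/\!\sim_L$ with $u\sim_L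 v$ iff $xuy\in L\Leftrightarrow xvy\in L$ for all $x,y\in\Sigma^*$. $\mathbf{ECom}$ is the pseudovariety of finite monoids whose idempotents commute. *)

(* Defs.v *)
From HB Require Import structures.
From mathcomp Require Import all_boot all_algebra.
Set Implicit Arguments. Unset Strict Implicit. Unset Printing Implicit Defensive.
Import GRing.Theory.
Local Open Scope ring_scope.

Inductive gen_semiring (R : comNzRingType) (A : seq R) : R -> Prop :=
  | gs_mem x : x \in A -> gen_semiring A x
  | gs_zero : gen_semiring A 0
  | gs_one : gen_semiring A 1
  | gs_add x y : gen_semiring A x -> gen_semiring A y -> gen_semiring A (x + y)
  | gs_mul x y : gen_semiring A x -> gen_semiring A y -> gen_semiring A (x * y).

Definition locally_finite (R : comNzRingType) : Prop :=
  forall A : seq R, exists s : seq R, forall x, gen_semiring A x -> x \in s.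

Section Automata.
Variables (R : comNzRingType) (Sigma : finType) (Q : finType).
Variable sigma : Q -> Sigma -> Q -> R.
Variables iota tau : Q -> R.

Definition trans_weight (w : seq Sigma) (qs : {ffun 'I_(size w).+1 -> Q})
  (k : 'I_(size w)) : R :=
  sigma (qs (widen_ord (leqnSn _) k)) (tnth (in_tuple w) k) (qs (lift ord0 k)).

Definition is_run (w : seq Sigma) (qs : {ffun 'I_(size w).+1 -> Q}) : bool :=
  [forall k, trans_weight qs k != 0].

Definition run_weight (w : seq Sigma) (qs : {ffun 'I_(size w).+1 -> Q}) : R :=
  iota (qs ord0) * (\prod_(k < size w) trans_weight qs k) * tau (qs ord_max).

Definition behaviour (w : seq Sigma) : R :=
  \sum_(qs : {ffun 'I_(size w).+1 -> Q} | is_run qs) run_weight qs.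

Definition reversible : Prop :=
  (forall p q q' a, sigma p a q != 0 -> sigma p a q' != 0 -> q = q') /\
  (forall p p' q a, sigma p a q != 0 -> sigma p' a q != 0 -> p = p').
End Automata.

Definition RevL (R : comNzRingType) (Sigma : finType) (L : seq Sigma -> Prop) : Prop :=
  exists (Q : finType) (sigma : Q -> Sigma -> Q -> R) (iota tau : Q -> R),
    reversible sigma /\ forall w, L w <-> behaviour sigma iota tau w != 0.

(* Syntactic congruence ~_L ; elements of M_L are its classes, with
   product induced by concatenation. *)
Definition synt_equiv (Sigma : Type) (L : seq Sigma -> Prop) (u v : seq Sigma) : Prop :=
  forall x y, L (x ++ u ++ y) <-> L (x ++ v ++ y).

Definition synt_monoid_finite (Sigma : eqType) (L : seq Sigma -> Prop) : Prop :=
  exists s : seq (seq Sigma), forall u, exists2 v, v \in s & synt_equiv L u v.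

Definition synt_idempotents_commute (Sigma : Type) (L : seq Sigma -> Prop) : Prop :=
  forall e f, synt_equiv L (e ++ e) e -> synt_equiv L (f ++ f) f ->
    synt_equiv L (e ++ f) (f ++ e).

Definition synt_monoid_in_ECom (Sigma : eqType) (L : seq Sigma -> Prop) : Prop :=
  synt_monoid_finite L /\ synt_idempotents_commute L.

(* Main.v *)
Require Import Defs.
From mathcomp Require Import all_boot all_algebra.
From mathcomp Require Import zify.
From Stdlib Require Import Classical.
Set Implicit Arguments. Unset Strict Implicit. Unset Printing Implicit Defensive.
Import GRing.Theory.

Section Aut.
Local Open Scope ring_scope.
Variables (R : comNzRingType) (Sigma : finType) (Q : finType).
Variable sigma : Q -> Sigma -> Q -> R.

Definition fcons n (p : Q) (f : {ffun 'I_n -> Q}) : {ffun 'I_n.+1 -> Q} :=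
  [ffun i => if unlift ord0 i is Some j then f j else p].

Lemma fcons0 n p (f : {ffun 'I_n -> Q}) : fcons p f ord0 = p.
Proof. by rewrite ffunE unlift_none. Qed.

Lemma fconsS n p (f : {ffun 'I_n -> Q}) j : fcons p f (lift ord0 j) = f j.
Proof. by rewrite ffunE liftK. Qed.

Lemma big_ffun_cons n (g : {ffun 'I_n.+1 -> Q} -> R) :
  \sum_qs g qs = \sum_p \sum_(f : {ffun 'I_n -> Q}) g (fcons p f).
Proof.
rewrite pair_big /= (reindex (fun x : Q * {ffun 'I_n -> Q} => fcons x.1 x.2)) //=.
exists (fun qs => (qs ord0, [ffun j => qs (lift ord0 j)])) => [[p f] _|qs _] /=.
  rewrite fcons0; congr (_, _); apply/ffunP => j; by rewrite ffunE fconsS.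
apply/ffunP => i; case: (unliftP ord0 i) => [j ->|->]; first by rewrite fconsS ffunE.
by rewrite fcons0.
Qed.

Fixpoint V (w : seq Sigma) (F : Q -> R) : Q -> R :=
  match w with
  | [::] => F
  | a :: w' => fun p => \sum_r sigma p a r * V w' F r
  end.

Lemma bridge w (I F : Q -> R) :
  \sum_(qs : {ffun 'I_(size w).+1 -> Q})
     I (qs ord0) * (\prod_(k < size w) trans_weight sigma qs k) * F (qs ord_max)
  = \sum_p I p * V w F p.
Proof.
elim: w I => [|a w IH] I.
  rewrite big_ffun_cons; apply: eq_bigr => p _ /=.
  rewrite (eq_bigr (fun _ => I p * F p)); last first.
    move=> f _; rewrite fcons0 (ord1 ord_max) fcons0.
    have -> : \prod_(k < size ([::] : seq Sigma)) @trans_weight R Sigma Q sigma [::] (fcons p f) k = 1.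
      by apply: big_ord0.
    by rewrite mulr1.
  rewrite sumr_const card_ffun card_ord expn0 /=.
  by rewrite mulr1n.
rewrite big_ffun_cons; apply: eq_bigr => p _ /=.
rewrite -(IH (sigma p a)) big_distrr /=; apply: eq_bigr => f _.
rewrite big_ord_recl fcons0.
have -> : (ord_max : 'I_(size w).+2) = lift ord0 ord_max by apply: val_inj.
rewrite fconsS.
have -> : @trans_weight R Sigma Q sigma (a :: w) (fcons p f) ord0 = sigma p a (f ord0).
  rewrite /trans_weight.
  have -> : widen_ord (leqnSn _) (ord0 : 'I_(size (a :: w))) = ord0 by apply: val_inj.
  by rewrite fcons0 fconsS (tnth_nth a).
rewrite !mulrA; congr (_ * _); congr (_ * _); apply: eq_bigr.
  move=> k _; rewrite /trans_weight.
  have -> : widen_ord (leqnSn _) (lift ord0 k : 'I_(size (a :: w))) =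
            lift ord0 (widen_ord (leqnSn _) k) by apply: val_inj.
  by rewrite !fconsS !(tnth_nth a).
Qed.

Lemma behaviour_V iota tau w :
  behaviour sigma iota tau w = \sum_p iota p * V w tau p.
Proof.
rewrite /behaviour -bridge big_mkcond /=; apply: eq_bigr => qs _.
case: ifP => // /negbT; rewrite /is_run negb_forall => /existsP [k].
rewrite negbK => /eqP Hk; rewrite /run_weight (bigD1 k) //= Hk.
by rewrite mul0r mulr0 mul0r.
Qed.

Definition T w p q := V w (fun s => (s == q)%:R) p.

Lemma V_lin w G p : V w G p = \sum_q T w p q * G q.
Proof.
elim: w p => [|a w IH] p /=.
  rewrite /T /= (bigD1 p) //= eqxx mul1r big1 ?addr0 // => q.
  by move=> nqp; rewrite eq_sym (negbTE nqp) mul0r.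
rewrite /T /=.
under eq_bigr => r _ do rewrite IH big_distrr.
rewrite exchange_big /=; apply: eq_bigr => q _.
by rewrite big_distrl /=; apply: eq_bigr => r _; rewrite mulrA.
Qed.

Lemma V_cat u v F p : V (u ++ v) F p = V u (V v F) p.
Proof.
elim: u p => [|a u IH] p //=; by apply: eq_bigr => r _; rewrite IH.
Qed.

Lemma V_ext u F G p : (forall r, F r = G r) -> V u F p = V u G p.
Proof.
move=> H; elim: u p => [|a u IH] p //=; by apply: eq_bigr => r _; rewrite IH.
Qed.

Lemma T_cat u v p q : T (u ++ v) p q = \sum_r T u p r * T v r q.
Proof. by rewrite /T V_cat V_lin. Qed.

Lemma T_cons a w p q : T (a :: w) p q = \sum_r sigma p a r * T w r q.
Proof. by []. Qed.

Lemma sum_neq0 (g : Q -> R) : \sum_r g r != 0 -> exists r, g r != 0.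
Proof.
move=> H; apply/existsP; apply: contraNT H => /existsPn Hn.
by rewrite big1 // => r _; apply/eqP; move: (Hn r); rewrite negbK.
Qed.

Lemma mul_neq0 (x y : R) : x * y != 0 -> x != 0 /\ y != 0.
Proof.
by case: (eqVneq x 0) => [->|hx]; [rewrite mul0r eqxx | case: (eqVneq y 0) => [->|]; [rewrite mulr0 eqxx|]].
Qed.

Hypothesis rev : reversible sigma.

Lemma T_row w p q q' : T w p q != 0 -> T w p q' != 0 -> q = q'.
Proof.
elim: w p q q' => [|a w IH] p q q'.
  rewrite /T /= => h1 h2; case: (eqVneq p q) h1 => [<- _|_]; last by rewrite mulr0n eqxx.
  by case: (eqVneq p q') h2 => // _; rewrite mulr0n eqxx.
rewrite !T_cons => /sum_neq0 [r /mul_neq0 [h1 h2]] /sum_neq0 [r' /mul_neq0 [h1' h2']].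
have er : r = r' by apply: rev.1 h1 h1'.
by subst r'; apply: IH h2 h2'.
Qed.

Lemma T_col w p p' q : T w p q != 0 -> T w p' q != 0 -> p = p'.
Proof.
elim: w p p' q => [|a w IH] p p' q.
  rewrite /T /= => h1 h2; case: (eqVneq p q) h1 => [-> _|_]; last by rewrite mulr0n eqxx.
  by case: (eqVneq p' q) h2 => // _; rewrite mulr0n eqxx.
rewrite !T_cons => /sum_neq0 [r /mul_neq0 [h1 h2]] /sum_neq0 [r' /mul_neq0 [h1' h2']].
have er : r = r' by apply: IH h2 h2'.
by subst r'; apply: rev.2 h1 h1'.
Qed.

Definition teq u v := forall p q, T u p q = T v p q.

Lemma idem_diag w : teq (w ++ w) w -> forall p q, p != q -> T w p q = 0.
Proof.
move=> H p q npq; apply/eqP; apply: contraNT npq => hpq.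
have E : T w p q = T w p q * T w q q.
  rewrite -{1}H T_cat (bigD1 q) //= big1 ?addr0 // => r nrq.
  case: (eqVneq (T w p r) 0) => [->|hr]; first by rewrite mul0r.
  by move: nrq; rewrite (T_row hr hpq) eqxx.
have hqq : T w q q != 0.
  by apply/negP => /eqP h0; move: hpq; rewrite E h0 mulr0 eqxx.
by apply/eqP; apply: T_col hpq hqq.
Qed.

Lemma diag_comm u v : (forall p q, p != q -> T u p q = 0) ->
  (forall p q, p != q -> T v p q = 0) -> teq (u ++ v) (v ++ u).
Proof.
move=> Hu Hv p q; rewrite !T_cat.
have E : forall (A B : Q -> Q -> R), (forall p q, p != q -> A p q = 0) ->
   \sum_r A p r * B r q = A p p * B p q.
  move=> A B HA; rewrite (bigD1 p) //= big1 ?addr0 // => r; rewrite eq_sym => hr.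
  by rewrite HA // mul0r.
rewrite !E //; case: (eqVneq p q) => [->|npq]; first by rewrite mulrC.
by rewrite (Hu p q npq) (Hv p q npq) !mulr0.
Qed.
End Aut.

Section Synt.
Variables (Sigma : Type) (L : seq Sigma -> Prop).

Lemma synt_refl u : synt_equiv L u u.
Proof. by []. Qed.
Lemma synt_sym u v : synt_equiv L u v -> synt_equiv L v u.
Proof. by move=> H x y; split => /H. Qed.
Lemma synt_trans u v w : synt_equiv L u v -> synt_equiv L v w -> synt_equiv L u w.
Proof. by move=> H1 H2 x y; split => [/H1/H2|/H2/H1]. Qed.
Lemma synt_catl z u v : synt_equiv L u v -> synt_equiv L (z ++ u) (z ++ v).
Proof. by move=> H x y; have := H (x ++ z) y; rewrite -!catA. Qed.
Lemma synt_catr z u v : synt_equiv L u v -> synt_equiv L (u ++ z) (v ++ z).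
Proof. by move=> H x y; have := H x (z ++ y); rewrite -!catA. Qed.

Fixpoint pw (e : seq Sigma) n := if n is n'.+1 then e ++ pw e n' else [::].

Lemma pw_add e a b : pw e (a + b) = pw e a ++ pw e b.
Proof. by elim: a => [|a IH] //=; rewrite IH catA. Qed.

Lemma pw_synt e : synt_equiv L (e ++ e) e -> forall n, 0 < n -> synt_equiv L (pw e n) e.
Proof.
move=> He; elim=> [|n IH] // _; case: n IH => [|n] IH; first by rewrite /= cats0.
apply: synt_trans He; apply: synt_catl; exact: IH.
Qed.
End Synt.

Lemma pigeon (C : finType) (g : nat -> C) : exists i j, [/\ 0 < i, i < j & g i = g j].
Proof.
apply: NNPP => Hn.
have inj : injective (fun k : 'I_#|C|.+1 => g k.+1).
  move=> x y Hxy; apply: val_inj; case: (ltngtP x y) => // H; exfalso; apply: Hn.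
    by exists x.+1, y.+1; split.
  by exists y.+1, x.+1; split.
by have := leq_card _ inj; rewrite card_ord ltnn.
Qed.

Lemma fin_reps (Sigma : eqType) (C : eqType) (g : seq Sigma -> C) (cs : seq C) :
  exists s : seq (seq Sigma), forall c, c \in cs -> (exists u, g u = c) ->
    exists2 v, v \in s & g v = c.
Proof.
elim: cs => [|c cs [s Hs]]; first by exists [::].
case: (classic (exists u, g u = c)) => [[u Hu]|Hn].
  exists (u :: s) => c'; rewrite inE => /orP [/eqP -> _|Hc' Hex].
    by exists u; rewrite ?inE ?eqxx.
  by have [v vs hv] := Hs c' Hc' Hex; exists v; rewrite // inE vs orbT.
exists s => c'; rewrite inE => /orP [/eqP -> /Hn //|Hc' Hex].
exact: Hs.
Qed.

Theorem lemma3 (R : comNzRingType) (Sigma : finType) (L : seq Sigma -> Prop) :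
  locally_finite R -> (0 < #|Sigma|)%N -> RevL R L -> synt_monoid_in_ECom L.
Proof.
move=> Hlf _ [Q [sigma [iota [tau [rev Hiff]]]]].
have teq_synt : forall u v, teq sigma u v -> synt_equiv L u v.
  move=> u v H x y; rewrite !Hiff !behaviour_V.
  suff -> : (\sum_p iota p * V sigma (x ++ u ++ y) tau p =
            \sum_p iota p * V sigma (x ++ v ++ y) tau p)%R by [].
  apply: eq_bigr => p _; rewrite !V_cat; congr (_ * _)%R; apply: V_ext => r.
  rewrite !V_cat (V_lin sigma u) (V_lin sigma v); apply: eq_bigr => q _; by rewrite H.
pose A := [seq sigma x.1.1 x.1.2 x.2 | x : Q * Sigma * Q].
have [s0 Hs0] := Hlf A.
have Tgen : forall u p q, gen_semiring A (T sigma u p q).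
  elim=> [|a u IH] p q.
    rewrite /T /=; case: eqP => _; [rewrite GRing.mulr1n; exact: gs_one|rewrite GRing.mulr0n; exact: gs_zero].
  rewrite T_cons; apply: (big_ind (gen_semiring A)); [exact: gs_zero|exact: gs_add|].
  move=> r _; apply: gs_mul (IH r q); apply: gs_mem.
  exact: (map_f (fun x : Q * Sigma * Q => sigma x.1.1 x.1.2 x.2) (mem_enum _ (p, a, r))).
pose code u := [ffun pq : Q * Q => (inord (index (T sigma u pq.1 pq.2) s0) : 'I_(size s0).+1)].
have code_teq : forall u v, code u = code v -> teq sigma u v.
  move=> u v H p q; move/ffunP: H => /(_ (p, q)); rewrite !ffunE /= => /(congr1 val) /=.
  rewrite !inordK ?ltnS ?index_size // => Hi.
  by rewrite -(nth_index 0%R (Hs0 _ (Tgen u p q))) Hi nth_index // Hs0.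
split.
  have [s Hs] := fin_reps code (enum {ffun Q * Q -> 'I_(size s0).+1}).
  exists s => u; have [v vs hv] := Hs (code u) (mem_enum _ _) (ex_intro _ u erefl).
  by exists v => //; apply: synt_sym; apply: teq_synt; apply: code_teq.
have idem : forall e, exists m, 0 < m /\ teq sigma (pw e m ++ pw e m) (pw e m).
  move=> e; have [i [j [hi hij hg]]] := pigeon (fun n => code (pw e n)).
  have Hij := code_teq _ _ hg.
  pose d := j - i.
  have key : forall t k, teq sigma (pw e (i + k)) (pw e (i + k + t * d)).
    elim=> [|t IHt] k; first by rewrite mul0n addn0 => p q.
    have -> : i + k + t.+1 * d = j + (k + t * d) by rewrite mulSn /d; lia.
    move=> p q; rewrite (IHt k p q) -addnA !pw_add !T_cat; apply: eq_bigr => r _.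
    by rewrite Hij.
  exists (i * d); split; first by rewrite muln_gt0 hi subn_gt0.
  have hid : i <= i * d by rewrite leq_pmulr // subn_gt0.
  move=> p q; have := key i (i * d - i) p q; rewrite subnKC // -pw_add => ->.
  by [].
move=> e f He Hf.
have [m [hm Hm]] := idem e; have [k [hk Hk]] := idem f.
have C := diag_comm (idem_diag rev Hm) (idem_diag rev Hk).
have Se := pw_synt He hm; have Sf := pw_synt Hf hk.
apply: synt_trans (synt_catr f (synt_sym Se)) _.
apply: synt_trans (synt_catl _ (synt_sym Sf)) _.
apply: synt_trans (teq_synt _ _ C) _.
apply: synt_trans (synt_catr _ Sf) _.
exact: synt_catl.
Qed.
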